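(* Let $G=(V,E)$ be a finite directed acyclic graph with nonnegative edge costs $c(u,v)$, a start node $s$ and a target node $t$, where $t$ is the unique node with no outgoing edges. Let $b>1$. Then for the sophisticated agent with present-bias parameter $b$ (with ties in its choices broken arbitrarily), $C_s(s)\le b\cdot C_o(s)$; that is, the cost ratio $C_s(s)/C_o(s)$ is at most $b$.
   Context: $C_o(u)$ denotes the minimum total cost of a directed path from $u$ to $t$. The sophisticated agent with present-bias parameter $b$ is defined recursively over a reverse topological order: $C_s(t)=0$, and for $u\neq t$, $S_s(u)\in\arg\min_{v:(u,v)\in E}\big(b\cdot c(u,v)+C_s(v)\big)$ and $C_s(u)=c(u,S_s(u))+C_s(S_s(u))$. Starting at $s$ the agent follows $s, S_s(s), S_s(S_s(s)),\dots$ until it reaches $t$, incurring total cost $C_s(s)$. The cost ratio is $C_s(s)/C_o(s)$. *)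

(* Defs.v *)
From mathcomp Require Import all_boot all_order all_algebra.
Set Implicit Arguments. Unset Strict Implicit. Unset Printing Implicit Defensive.
Import Order.TTheory GRing.Theory Num.Theory.
Local Open Scope ring_scope.

Section Defs.
Variables (R : realFieldType) (V : finType).

Fixpoint path_cost (c : V -> V -> R) (u : V) (p : seq V) : R :=
  if p is v :: p' then c u v + path_cost c v p' else 0.

Definition acyclic (E : rel V) : Prop :=
  forall v p, path E v p -> last v p = v -> p = [::].

Definition unique_sink (E : rel V) (t : V) : Prop :=
  forall u, (forall v, ~~ E u v) <-> u = t.

Definition is_opt_cost (E : rel V) (c : V -> V -> R) (t u : V) (co : R) : Prop :=
  (exists2 p, path E u p /\ last u p = t & path_cost c u p = co) /\
  (forall p, path E u p -> last u p = t -> co <= path_cost c u p).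

(* (S, Cs) is a sophisticated agent with bias b: S is the choice (successor)
   function, chosen with arbitrary tie-breaking among the minimizers, and
   Cs the induced cost-to-go. *)
Definition sophisticated (E : rel V) (c : V -> V -> R) (t : V) (b : R)
    (S : V -> V) (Cs : V -> R) : Prop :=
  Cs t = 0 /\
  (forall u, u != t ->
     [/\ E u (S u),
         (forall v, E u v -> b * c u (S u) + Cs (S u) <= b * c u v + Cs v)
       & Cs u = c u (S u) + Cs (S u)]).

End Defs.

(* Main.v *)
Require Import Defs.
From mathcomp Require Import all_boot all_order all_algebra.
Import Order.TTheory GRing.Theory Num.Theory.
Local Open Scope ring_scope.

Theorem theorem1 (R : realFieldType) (V : finType) (E : rel V)
    (c : V -> V -> R) (s t : V) (b : R)
    (S : V -> V) (Cs : V -> R) (co : R) :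
  acyclic E ->
  unique_sink E t ->
  (forall u v, E u v -> 0 <= c u v) ->
  1 < b ->
  sophisticated E c t b S Cs ->
  is_opt_cost E c t s co ->
  Cs s <= b * co.
Proof.
move=> _ Hsink Hc Hb [Ht Hsoph] [[p [Hp Hl] <-] _].
elim: p s Hp Hl => [|v p IH] u /=.
  by move=> _ ->; rewrite Ht mulr0.
move=> /andP[Euv Hp] Hl.
have unt : u != t.
  apply/eqP => eut; have := (proj1 (Hsink u)).
  by move=> H; have /negP := (proj2 (Hsink u) eut) v.
have [ES Hmin ->] := Hsoph u unt.
have IHv := IH v Hp Hl.
have c0 := Hc _ _ ES.
have h1 : c u (S u) <= b * c u (S u).
  by rewrite -{1}(mul1r (c u (S u))) ler_wpM2r // ltW.
have h2 := Hmin v Euv.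
rewrite mulrDr.
apply: le_trans (_ : b * c u (S u) + Cs (S u) <= _).
  by rewrite lerD2r.
apply: le_trans h2 _.
by rewrite lerD2l.
Qed.
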